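(* Consider a run of the algorithm CTG (defined in the context), with $f(\emptyset)=0$, in which the events $\mathcal{E}_1,\mathcal{E}_2,\mathcal{E}_3$ (defined in the context) all hold. Then whenever an element $s$ is added to the solution set $S$ (with $S$ denoting the solution set just before the addition), $$\Delta f(S,s)\ge\frac{1-\alpha}{\kappa}\big(f(OPT)-f(S)\big)-2\epsilon.$$
   Context: Let $U$ be a finite ground set with $|U|=n$, and let $f:2^U\to\mathbb{R}_{\geq 0}$ be monotone and submodular. For $X\subseteq U$, $u\in U$, write $\Delta f(X,u)=f(X\cup\{u\})-f(X)$. Let $\kappa$ be a positive integer and let $OPT$ be an optimal solution of $\max\{f(X): X\subseteq U,|X|\le\kappa\}$. There is no value oracle for $f$; instead, for any $X\subseteq U$, $u\in U$, one can draw independent samples from a distribution $\mathcal{D}(X,u)$ with $\mathbb{E}[\mathcal{D}(X,u)]=\Delta f(X,u)$ and all samples lying in $[0,R]$; all samples drawn are independent. Logarithms are natural; $h(\alpha)=\log(\kappa/\alpha)/\alpha$. For a call of CS on $(S,u)$, regard its samples as initial terms of an infinite i.i.d. sequence from $\mathcal{D}(S,u)$ and let $\widehat{\Delta f_t}(S,u)$ be the average of the first $t$ terms. Procedure CS$(w,\epsilon,\delta,S,u)$: let $N_2=R^2\log(6nh(\alpha)/\delta)/(2\epsilon^2)$. For $t=1,2,\dots,N_2$: draw the $t$-th sample, update $\widehat{\Delta f_t}(S,u)$, set $C_t=R\sqrt{\log(12nh(\alpha)t^2/\delta)/(2t)}$; if $\widehat{\Delta f_t}(S,u)-C_t\ge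 w-\epsilon$ return true; else if $\widehat{\Delta f_t}(S,u)+C_t\le w+\epsilon$ return false. If the loop completes, return true iff $\widehat{\Delta f_{N_2}}(S,u)\ge w$. Algorithm CTG$(\epsilon,\delta,\alpha)$ with $\epsilon,\delta,\alpha\in(0,1)$: let $N_1=R^2\log(6n/\delta)/(2\epsilon^2)$. For each $s\in U$ let $\hat f(s)$ be the mean of $N_1$ samples from $\mathcal{D}(\emptyset,s)$, and let $d=\max_{s\in U}\hat f(s)$. Set $w\gets d$, $S\gets\emptyset$. While $w>\alpha d/\kappa$: for each $u\in U$ in turn, if $|S|<\kappa$, call CS$(w,\epsilon,\delta,S,u)$ and if it returns true set $S\gets S\cup\{u\}$; after the pass set $w\gets w(1-\alpha)$. Return $S$. Events: $\mathcal{E}_1$: $\max_{s\in U}f(\{s\})-\epsilon\le d\le\max_{s\in U}f(\{s\})+\epsilon$. $\mathcal{E}_2$: for every call of CS on a pair $(S,u)$ and every $t\in\mathbb{N}_+$, $|\widehat{\Delta f_t}(S,u)-\Delta f(S,u)|\le C_t$. $\mathcal{E}_3$: for every call of CS on a pair $(S,u)$, $|\widehat{\Delta f_{N_2}}(S,u)-\Delta f(S,u)|\le\epsilon$. *)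

(* Defs.v *)
From HB Require Import structures.
From mathcomp Require Import all_boot all_order all_algebra.
From mathcomp Require Import all_classical all_reals all_analysis.
Set Implicit Arguments. Unset Strict Implicit. Unset Printing Implicit Defensive.
Import Order.TTheory GRing.Theory Num.Theory.
Local Open Scope ring_scope.

(* Deterministic model of a run of CTG: all randomness is given by the sample
   values that were drawn.  [init s i] is the (i+1)-th sample from D(emptyset,s)
   used in the initial estimation; [smp k t] is the (t+1)-th term of the
   (infinite i.i.d.) sample sequence of the k-th call of CS made by the run
   (calls numbered 0,1,2,... in execution order). *)

Section CTG.
Variable R : realType.
Variable U : finType.

Definition Delta (f : {set U} -> R) (X : {set U}) (u : U) : R := f (u |: X) - f X.

Definition monotone_set (f : {set U} -> R) :=
  forall A B : {set U}, A \subset B -> f A <= f B.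
Definition submodular (f : {set U} -> R) :=
  forall A B : {set U}, f (A :|: B) + f (A :&: B) <= f A + f B.

(* smallest natural number >= x (0 if x <= 0) *)
Definition natceil (x : R) : nat := Num.truncn ((Num.ceil x)%:~R : R).

Definition avg (x : nat -> R) (t : nat) : R := (\sum_(i < t) x i) / t%:R.

Variables (kappa : nat) (eps delta alpha Rg : R).

Definition nU : R := #|U|%:R.
Definition h : R := ln (kappa%:R / alpha) / alpha.
Definition N1 : R := Rg ^+ 2 * ln (6 * nU / delta) / (2 * eps ^+ 2).
Definition N2 : R := Rg ^+ 2 * ln (6 * nU * h / delta) / (2 * eps ^+ 2).
Definition N1n : nat := natceil N1.
Definition N2n : nat := natceil N2.
Definition Ct (t : nat) : R :=
  Rg * Num.sqrt (ln (12 * nU * h * (t%:R) ^+ 2 / delta) / (2 * t%:R)).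

(* The procedure CS(w, eps, delta, S, u) run on the sample sequence x.
   [cs_iter k t] performs iterations t, t+1, ..., t+k-1 of the loop. *)
Fixpoint cs_iter (w : R) (x : nat -> R) (k t : nat) : bool :=
  match k with
  | 0 => w <= avg x N2n
  | k'.+1 =>
      if w - eps <= avg x t - Ct t then true
      else if avg x t + Ct t <= w + eps then false
      else cs_iter w x k' t.+1
  end.
Definition CS (w : R) (x : nat -> R) : bool := cs_iter w x N2n 1.

Variables (ord : seq U) (init : U -> nat -> R) (smp : nat -> nat -> R).

(* estimates of f({s}) and d *)
Definition fhat (s : U) : R := avg (init s) N1n.
Definition dd : R := \big[Num.max/0]_(s : U) fhat s.

Definition wj (j : nat) : R := dd * (1 - alpha) ^+ j.
(* pass j is executed iff the while-guard held before passes 0..j *)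
Definition executed (j : nat) : Prop :=
  forall i, (i <= j)%N -> alpha * dd / kappa%:R < wj i.

(* state: current solution and number of CS calls made so far *)
Record st := St { cur : {set U}; cnt : nat }.

Definition step (w : R) (s : st) (u : U) : st :=
  if (#|cur s| < kappa)%N then
    St (if CS w (smp (cnt s)) then u |: cur s else cur s) (cnt s).+1
  else s.

Definition run_pass (w : R) (s : st) : st := foldl (step w) s ord.

Fixpoint before_pass (j : nat) : st :=
  match j with
  | 0 => St (finset.set0 : {set U}) 0
  | j'.+1 => run_pass (wj j') (before_pass j')
  end.

(* [call k S u w]: during the run, the k-th call of CS is CS(w,eps,delta,S,u) *)
Definition call (k : nat) (S : {set U}) (u : U) (w : R) : Prop :=
  exists j pre post,
    [/\ executed j, ord = pre ++ u :: post, w = wj j &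
      [/\ S = cur (foldl (step w) (before_pass j) pre),
        k = cnt (foldl (step w) (before_pass j) pre) &
        (#|S| < kappa)%N]].

(* [added S u]: during the run, u is added to the solution set, whose value
   just before the addition is S *)
Definition added (S : {set U}) (u : U) : Prop :=
  exists k w, call k S u w /\ CS w (smp k).

Variable f : {set U} -> R.

Definition E1 : Prop :=
  let M := \big[Num.max/0]_(s : U) f [set s] in M - eps <= dd <= M + eps.
Definition E2 : Prop :=
  forall k S u w, call k S u w ->
    forall t : nat, (0 < t)%N -> `|avg (smp k) t - Delta f S u| <= Ct t.
Definition E3 : Prop :=
  forall k S u w, call k S u w -> `|avg (smp k) N2n - Delta f S u| <= eps.

End CTG.

(* Main.v *)
Require Import Defs.
From HB Require Import structures.
From mathcomp Require Import all_boot all_order all_algebra.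
From mathcomp Require Import all_classical all_reals all_analysis.
From mathcomp Require Import lra.
Import Order.TTheory GRing.Theory Num.Theory.
Local Open Scope ring_scope.

Lemma cs_prop (R : realType) (U : finType) (kappa : nat) (eps delta alpha Rg w : R)
  (x : nat -> R) (D : R) :
  (forall t, (0 < t)%N -> `|avg x t - D| <= Ct U kappa delta alpha Rg t) ->
  `|avg x (N2n U kappa eps delta alpha Rg) - D| <= eps ->
  forall k t, (0 < t)%N ->
    (cs_iter U kappa eps delta alpha Rg w x k t -> w - eps <= D) /\
    (~~ cs_iter U kappa eps delta alpha Rg w x k t -> D <= w + eps).
Proof.
move=> H2 H3; elim=> [|k IH] t t0 /=.
  move: H3; rewrite ler_norml => /andP[a b].
  split => [h|]; first lra.
  rewrite -ltNge => h; lra.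
have := H2 t t0; rewrite ler_norml => /andP[a b].
case: ifP => h1; first by split => // _; lra.
case: ifP => h2; first by split => // _; lra.
exact: IH.
Qed.

Lemma subset_foldl (R : realType) (U : finType) (kappa : nat) (eps delta alpha Rg w : R)
  (smp : nat -> nat -> R) (l : seq U) (s : st U) :
  cur s \subset cur (foldl (step kappa eps delta alpha Rg smp w) s l).
Proof.
elim: l s => [|u l IH] s /=; first exact: subxx.
apply: fintype.subset_trans (IH (step kappa eps delta alpha Rg smp w s u)).
rewrite /step; case: ifP => _ //=; case: ifP => _ //=; exact: finset.subsetUr.
Qed.

Lemma Delta_anti (R : realType) (U : finType) (f : {set U} -> R) (A B : {set U}) (o : U) :
  monotone_set f -> submodular f -> A \subset B -> Delta f B o <= Delta f A o.
Proof.
move=> mono sub AB; rewrite /Delta.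
case: (boolP (o \in B)) => oB.
  have -> : o |: B = B.
    by apply/setP => x; rewrite !inE; case: eqP => // ->.
  have := mono A (o |: A) (finset.subsetUr _ _); lra.
have := sub (o |: A) B.
have -> : (o |: A) :|: B = o |: B.
  apply/setP => x; rewrite !inE; have := fintype.subsetP AB x.
  by case: (x == o); case: (x \in A); case: (x \in B) => //= ->.
have -> : (o |: A) :&: B = A.
  apply/setP => x; rewrite !inE; have := fintype.subsetP AB x.
  case: eqP => [->|_]; last by case: (x \in A); case: (x \in B) => //= ->.
  by rewrite (negbTE oB); case: (o \in A) => //= ->.
lra.
Qed.

Lemma sum_bound (R : realType) (U : finType) (f : {set U} -> R) (S : {set U}) (B : R) :
  monotone_set f -> submodular f -> (forall o, Delta f S o <= B) ->
  forall l : seq U, f (S :|: [set x in l]) - f S <= (size l)%:R * B.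
Proof.
move=> mono sub hB; elim => [|a l IH] /=.
  have -> : S :|: [set x in [::]] = S by apply/setP => x; rewrite !inE orbF.
  by rewrite mul0r subrr.
have -> : S :|: [set x in a :: l] = a |: (S :|: [set x in l]).
  by apply/setP => x; rewrite !inE orbCA.
have := @Delta_anti _ _ f _ _ a mono sub (finset.subsetUl S [set x in l]).
have := hB a; rewrite /Delta -addn1 natrD mulrDl mul1r; lra.
Qed.

Theorem lemma5 (R : realType) (U : finType) (f : {set U} -> R)
  (kappa : nat) (eps delta alpha Rg : R) (OPT : {set U})
  (ord : seq U) (init : U -> nat -> R) (smp : nat -> nat -> R) :
  (forall X, 0 <= f X) -> monotone_set f -> submodular f -> f (finset.set0 : {set U}) = 0 ->
  (0 < kappa)%N ->
  (#|OPT| <= kappa)%N -> (forall X : {set U}, (#|X| <= kappa)%N -> f X <= f OPT) ->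
  0 < eps < 1 -> 0 < delta < 1 -> 0 < alpha < 1 -> 0 < Rg ->
  perm_eq ord (enum U) ->
  (forall s i, 0 <= init s i <= Rg) -> (forall k t, 0 <= smp k t <= Rg) ->
  E1 eps delta Rg init f ->
  E2 kappa eps delta alpha Rg ord init smp f ->
  E3 kappa eps delta alpha Rg ord init smp f ->
  forall (S : {set U}) (s : U),
    added kappa eps delta alpha Rg ord init smp S s ->
    Delta f S s >= (1 - alpha) / kappa%:R * (f OPT - f S) - 2 * eps.
Proof.
move=> f0 mono sub fset0 k0 OPTk OPTmax /andP[e0 e1] /andP[d0 d1] /andP[a0 a1] Rg0
  perm hinit hsmp E1h E2h E3h S s [k [w [hc CSk]]].
have [j [pre [post [ex ordE wE [SE kE Sk]]]]] := hc.
have lb : w - eps <= Delta f S s.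
  have [h _] := @cs_prop _ _ _ _ _ _ _ w _ _ (E2h _ _ _ _ hc) (E3h _ _ _ _ hc)
    (N2n U kappa eps delta alpha Rg) 1 (isT : (0 < 1)%N).
  exact: h CSk.
have dd0 : 0 <= dd eps delta Rg init.
  rewrite /dd; apply: (big_ind (fun x => 0 <= x)) => [//|x y hx hy|i _].
    by rewrite le_max hx.
  rewrite /fhat /avg divr_ge0 ?ler0n // sumr_ge0 // => i' _.
  by case/andP: (hinit i i').
have a1' : 0 < 1 - alpha by lra.
have w0 : 0 <= w.
  by rewrite wE /wj mulr_ge0 // exprn_ge0 // ltW.
have hw : w <= w / (1 - alpha) by rewrite ler_pdivlMr //; nra.
pose B := w / (1 - alpha) + eps.
have B0 : 0 <= B by rewrite /B; have := divr_ge0 w0 (ltW a1'); lra.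
have hB : forall o, Delta f S o <= B.
  move=> o; case: (boolP (o \in S)) => oS.
    have -> : Delta f S o = 0.
      rewrite /Delta; have -> : o |: S = S.
        by apply/setP => x; rewrite !inE; case: eqP => // ->.
      by rewrite subrr.
    exact: B0.
  case: j ex wE SE kE => [|j'] ex wE SE kE.
    have := @Delta_anti _ _ f _ _ o mono sub (finset.sub0set S).
    rewrite /Delta finset.setU0 fset0 subr0.
    have : f [set o] <= \big[Num.max/0]_(s : U) f [set s].
      exact: (le_bigmax 0 (fun s => f [set s]) o).
    move: E1h; rewrite /E1 /= => /andP[h1 _].
    have : w = dd eps delta Rg init by rewrite wE /wj expr0 mulr1.
    rewrite /B; lra.
  pose w' := wj eps delta alpha Rg init j'.
  have ww' : w / (1 - alpha) = w'.
    rewrite wE /wj exprSr mulrA mulfK //; lra.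
  have : o \in ord by rewrite (perm_mem perm) fintype.mem_enum.
  case/splitPr def_o: {1}ord / => [p1 p2].
  pose st' := foldl (step kappa eps delta alpha Rg smp w')
     (before_pass kappa eps delta alpha Rg ord init smp j') p1.
  have hsub : cur (step kappa eps delta alpha Rg smp w' st' o) \subset S.
    rewrite SE; apply: fintype.subset_trans (@subset_foldl _ _ _ _ _ _ _ _ _ _ _).
    rewrite /= /run_pass -/w' {2}def_o foldl_cat /=.
    exact: subset_foldl.
  have hS' : cur st' \subset S.
    apply: fintype.subset_trans hsub.
    exact: (@subset_foldl _ _ kappa eps delta alpha Rg w' smp [:: o] st').
  have cardS' : (#|cur st'| < kappa)%N.
    exact: leq_ltn_trans (subset_leq_card hS') Sk.
  move: hsub; rewrite /step cardS' /=.
  case hCS : (CS U kappa eps delta alpha Rg w' (smp (cnt st'))) => /= hsub.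
    by move: oS; rewrite (fintype.subsetP hsub o) // setU11.
  have hc' : call kappa eps delta alpha Rg ord init smp (cnt st') (cur st') o w'.
    exists j', p1, p2; split => //.
    by move=> i hi; apply: ex; apply: leqW.
  have [_ h] := @cs_prop _ _ _ _ _ _ _ w' _ _ (E2h _ _ _ _ hc') (E3h _ _ _ _ hc')
    (N2n U kappa eps delta alpha Rg) 1 (isT : (0 < 1)%N).
  have := h (negbT hCS).
  have := @Delta_anti _ _ f _ _ o mono sub hS'.
  rewrite /B ww'; lra.
have hsum := @sum_bound _ _ f S B mono sub hB (enum OPT).
rewrite finset.set_enum -cardE in hsum.
have hX : f OPT - f S <= kappa%:R * B.
  have := mono _ _ (finset.subsetUr S OPT).
  have : (#|OPT|%:R : R) * B <= kappa%:R * B.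
    by apply: ler_wpM2r => //; rewrite ler_nat.
  lra.
have k0' : (0 : R) < kappa%:R by rewrite ltr0n.
have hy : (f OPT - f S) / kappa%:R <= B by rewrite ler_pdivrMr // mulrC.
have hB' : (1 - alpha) * B = w + (1 - alpha) * eps.
  rewrite /B mulrDr mulrC divfK //; lra.
have -> : (1 - alpha) / kappa%:R * (f OPT - f S) = (1 - alpha) * ((f OPT - f S) / kappa%:R).
  by rewrite mulrAC -mulrA.
clearbody B.
have h1 := ler_wpM2l (ltW a1') hy.
have hae : 0 <= alpha * eps by rewrite mulr_ge0 // ltW.
rewrite [(1 - alpha) * eps]mulrBl mul1r in hB'.
lra.
Qed.
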